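(* Fix $\alpha\in(0,1)$ and $p,q\in[0,1]$ with $q=\alpha p$. Let $\hat{\mathcal{M}}^\ast(p,q)$ be the output of the greedy procedure \texttt{OptSupplierSet}$(p,q)$, and let $\mathcal{M}^\ast$ be a maximizer of $R(p,q,\mathcal{M})$ over all $\mathcal{M}\subseteq\widetilde{S}(q)$ with $|\mathcal{M}|\le b$. Then $$R(p,q,\hat{\mathcal{M}}^\ast(p,q))\ \ge\ \Big(1-\frac1e\Big)R(p,q,\mathcal{M}^\ast).$$
   Context: Let $\mathcal{G}=(\mathcal{U},\mathcal{E})$ be a finite directed graph without self-loops, $\mathcal{U}=\{1,\dots,U\}$. For $u,v\in\mathcal{U}$, $D(u,v;\mathcal{G})$ denotes the number of edges of a shortest directed path from $u$ to $v$ in $\mathcal{G}$, with $D(u,v;\mathcal{G})=+\infty$ if there is no such path. For an integer $d\ge0$, the $d$-visible set of $u$ is $\mathcal{V}(u,d;\mathcal{G})=\{v\in\mathcal{U}: D(v,u;\mathcal{G})\le d\}$. Fix an integer social visibility threshold $\tau\ge1$. Let $\mathcal{R}\subseteq\mathcal{U}$ (requesters) and $\mathcal{S}\subseteq\mathcal{U}$ (suppliers) be disjoint. Each requester $u\in\mathcal{R}$ has a valuation $p_u\in[0,1]$ and each supplier $u\in\mathcal{S}$ has a valuation $q_u\in[0,1]$. Let $b$ be a positive integer (budget). For $p\in[0,1]$ let $\widetilde{R}(p)=\{u\in\mathcal{R}: p_u\ge p\}$ and for $q\in[0,1]$ let $\widetilde{S}(q)=\{u\in\mathcal{S}: q_u\le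 q\}$. For $\mathcal{M}\subseteq\mathcal{S}$ let $\widetilde{G}(p,\mathcal{M})$ be the graph obtained from $\mathcal{G}$ by adding a directed edge from every $s\in\mathcal{M}$ to every $r\in\widetilde{R}(p)$. For $u\in\widetilde{R}(p)$ let $I_u(p,\mathcal{M})=|\mathcal{V}(u,\tau;\widetilde{G}(p,\mathcal{M}))\setminus\mathcal{V}(u,\tau;\mathcal{G})|$, and $I(p,\mathcal{M})=\sum_{u\in\widetilde{R}(p)}I_u(p,\mathcal{M})$. The revenue is $R(p,q,\mathcal{M})=p\,I(p,\mathcal{M})-q\,I(p,\mathcal{M})$. The greedy procedure \texttt{OptSupplierSet}$(p,q)$: start with $\mathcal{M}=\emptyset$; for $t=1,\dots,b$, pick $u^\ast\in\widetilde{S}(q)$ maximizing the marginal gain $R(p,q,\mathcal{M}\cup\{u\})-R(p,q,\mathcal{M})$ (ties broken arbitrarily) and set $\mathcal{M}\leftarrow\mathcal{M}\cup\{u^\ast\}$; output $\hat{\mathcal{M}}^\ast(p,q)=\mathcal{M}$ (a subset of $\widetilde{S}(q)$ of size at most $b$). *)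

(* Defs.v *)
From HB Require Import structures.
From mathcomp Require Import all_boot all_order all_algebra.
From mathcomp Require Import reals sequences exp.
Set Implicit Arguments. Unset Strict Implicit. Unset Printing Implicit Defensive.
Import Order.TTheory GRing.Theory Num.Theory.
Local Open Scope ring_scope.

(* Vertices are 'I_n; a directed graph is an edge relation e : rel 'I_n
   (e x y = there is an edge from x to y). *)

(* within e d v u : there is a directed walk from v to u in e with at most d
   edges, i.e. D(v,u;e) <= d (a shortest walk is a shortest path). *)
Fixpoint within (n : nat) (e : rel 'I_n) (d : nat) (v u : 'I_n) : bool :=
  match d with
  | 0 => v == u
  | d'.+1 => within e d' v u || [exists w, e v w && within e d' w u]
  end.

Definition visible (n : nat) (e : rel 'I_n) (u : 'I_n) (d : nat) : {set 'I_n} :=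
  [set v | within e d v u].

Section Model.
Variables (R : realType) (n : nat) (e : rel 'I_n) (tau : nat)
  (Rq Sp : {set 'I_n}) (pv qv : 'I_n -> R).

Definition Rtil (p : R) : {set 'I_n} := [set u in Rq | p <= pv u].
Definition Stil (q : R) : {set 'I_n} := [set u in Sp | qv u <= q].

Definition Gtil (p : R) (M : {set 'I_n}) : rel 'I_n :=
  fun x y => e x y || ((x \in M) && (y \in Rtil p)).

Definition Iu (p : R) (M : {set 'I_n}) (u : 'I_n) : nat :=
  #|visible (Gtil p M) u tau :\: visible e u tau|.

Definition Itot (p : R) (M : {set 'I_n}) : nat :=
  (\sum_(u in Rtil p) Iu p M u)%N.

Definition revenue (p q : R) (M : {set 'I_n}) : R :=
  p * (Itot p M)%:R - q * (Itot p M)%:R.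

(* Ms : nat -> {set 'I_n} is a run of the greedy procedure OptSupplierSet(p,q)
   with budget b (ties broken arbitrarily): Ms 0 = set0 and at each step
   t < b a maximizer u* of the marginal gain over \tilde S(q) is added
   (if \tilde S(q) is empty nothing can be picked and M stays unchanged). *)
Definition greedy_run (p q : R) (b : nat) (Ms : nat -> {set 'I_n}) : Prop :=
  Ms 0%N = set0 /\
  forall t, (t < b)%N ->
    (Stil q = set0 /\ Ms t.+1 = Ms t) \/
    exists2 us, us \in Stil q &
      (Ms t.+1 = us |: Ms t /\
       forall u, u \in Stil q ->
         revenue p q (u |: Ms t) - revenue p q (Ms t)
           <= revenue p q (us |: Ms t) - revenue p q (Ms t)).

Definition optimal_set (p q : R) (b : nat) (Mstar : {set 'I_n}) : Prop :=
  Mstar \subset Stil q /\ (#|Mstar| <= b)%N /\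
  forall M : {set 'I_n}, M \subset Stil q -> (#|M| <= b)%N -> revenue p q M <= revenue p q Mstar.

End Model.

(* Main.v *)
Require Import Defs.
From HB Require Import structures.
From mathcomp Require Import all_boot all_order all_algebra.
From mathcomp Require Import reals sequences exp.
From mathcomp Require Import lra zify ring.
Import Order.TTheory GRing.Theory Num.Theory.
Set Implicit Arguments. Unset Strict Implicit.
Local Open Scope ring_scope.

Lemma within_mono_d (n : nat) (g : rel 'I_n) d d' v u :
  (d <= d')%N -> within g d v u -> within g d' v u.
Proof.
elim: d' v => [|d' IH] v.
  by rewrite leqn0 => /eqP ->.
rewrite leq_eqVlt => /orP [/eqP -> //| Hd] H /=.
by rewrite (IH v Hd H).
Qed.

Lemma within_rel (n : nat) (g1 g2 : rel 'I_n) d v u :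
  (forall x y, g1 x y -> g2 x y) -> within g1 d v u -> within g2 d v u.
Proof.
move=> Hg; elim: d v => [|d IH] v //= /orP [H|/existsP [w /andP [H1 H2]]].
  by rewrite IH.
by apply/orP; right; apply/existsP; exists w; rewrite Hg // IH.
Qed.

Lemma within_cat (n : nat) (g : rel 'I_n) a b v w u :
  within g a v w -> within g b w u -> within g (a + b) v u.
Proof.
elim: a v => [|a IH] v /=.
  by move=> /eqP ->.
move=> /orP [H|/existsP [x /andP [H1 H2]]] H3.
  by rewrite (IH _ H H3).
apply/orP; right; apply/existsP; exists x.
by rewrite H1 (IH _ H2 H3).
Qed.

Lemma within_edge (n : nat) (g : rel 'I_n) v w : g v w -> within g 1 v w.
Proof.
by move=> H /=; apply/orP; right; apply/existsP; exists w; rewrite H eqxx.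
Qed.

Section G.
Variables (R : realType) (n : nat) (e : rel 'I_n) (Rq : {set 'I_n}) (pv : 'I_n -> R) (p : R).

Lemma charac (M : {set 'I_n}) d v u :
  within (Gtil e Rq pv p M) d v u ->
  within e d v u \/ exists s r d1 d2,
     [/\ s \in M, r \in Rtil Rq pv p, (d1 + d2 < d)%N, within e d1 v s & within e d2 r u].
Proof.
elim: d v => [|d IH] v /=; first by left.
move=> /orP [H|/existsP [w /andP [H1 H2]]].
  case: (IH v H) => [H'|[s [r [d1 [d2 [? ? ? ? ?]]]]]].
    by left; rewrite H'.
  by right; exists s, r, d1, d2; split => //; apply: ltnW; rewrite ltnS.
move: H1; rewrite /Gtil => /orP [He|/andP [HM HR]].
  case: (IH w H2) => [H'|[s [r [d1 [d2 [? ? ? ? ?]]]]]].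
    by left; apply/orP; right; apply/existsP; exists w; rewrite He H'.
  right; exists s, r, d1.+1, d2; split => //.
  by apply/orP; right; apply/existsP; exists w; rewrite He.
case: (IH w H2) => [H'|[s [r [d1 [d2 [? ? Hlt ? ?]]]]]].
  by right; exists v, w, 0%N, d; split => //=.
right; exists v, r, 0%N, d2; split => //=.
by rewrite ltnS; apply: leq_trans (leq_addl d1 d2) (ltnW Hlt).
Qed.

Lemma charac_inv (M : {set 'I_n}) d v u s r d1 d2 :
  s \in M -> r \in Rtil Rq pv p -> (d1 + d2 < d)%N -> within e d1 v s -> within e d2 r u ->
  within (Gtil e Rq pv p M) d v u.
Proof.
move=> HM HR Hlt H1 H2.
have Hg : forall x y, e x y -> Gtil e Rq pv p M x y by move=> x y H; rewrite /Gtil H.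
have := within_cat (within_cat (within_rel Hg H1) (within_edge (g := Gtil e Rq pv p M) (v := s) (w := r) _)) (within_rel Hg H2).
move=> /(_ _) H; apply: within_mono_d (H _); first by rewrite addn1 addSn.
by rewrite /Gtil HM HR orbT.
Qed.

End G.

Lemma card_sub (T : finType) (X Y Z W : {set T}) :
  W \subset Y -> W \subset Z -> X \subset Y :|: Z -> (#|X| + #|W| <= #|Z| + #|Y|)%N.
Proof.
move=> HWY HWZ HX.
have h1 := subset_leq_card HX.
have h2 : (#|W| <= #|Y :&: Z|)%N by apply: subset_leq_card; rewrite subsetI HWY HWZ.
have h3 := cardsUI Y Z.
rewrite addnC in h3; lia.
Qed.

Section I.
Variables (R : realType) (n : nat) (e : rel 'I_n) (tau : nat) (Rq : {set 'I_n}) (pv : 'I_n -> R) (p : R).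

Let V M u := visible (Gtil e Rq pv p M) u tau.

Lemma V0_sub M u : visible e u tau \subset V M u.
Proof.
apply/subsetP => v; rewrite !inE; apply: within_rel => x y H.
by rewrite /Gtil H.
Qed.

Lemma V_mono (A B : {set 'I_n}) u : A \subset B -> V A u \subset V B u.
Proof.
move=> HAB; apply/subsetP => v; rewrite !inE; apply: within_rel => x y.
rewrite /Gtil => /orP [->//|/andP [H1 H2]].
by rewrite (subsetP HAB _ H1) H2 orbT.
Qed.

Lemma V_union (A B : {set 'I_n}) x u : A \subset B -> V (x |: B) u \subset V B u :|: V (x |: A) u.
Proof.
move=> HAB; apply/subsetP => v; rewrite !inE => /charac [H|[s [r [d1 [d2 [Hs Hr Hlt H1 H2]]]]]].
  by rewrite (within_rel _ H) // => a b Hab; rewrite /Gtil Hab.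
move: Hs; rewrite in_setU => /orP [Hs|Hs].
  by rewrite (@charac_inv _ _ _ _ _ _ (x |: A) _ _ _ s _ _ _ _ Hr Hlt H1 H2) ?orbT // in_setU Hs.
by rewrite (charac_inv (s := s) _ Hr Hlt H1 H2).
Qed.

Lemma Iu_mono (A B : {set 'I_n}) u : A \subset B -> (Iu e tau Rq pv p A u <= Iu e tau Rq pv p B u)%N.
Proof.
move=> HAB; apply: subset_leq_card; apply: setSD; exact: V_mono.
Qed.

Lemma Iu_sub (A B : {set 'I_n}) x u : A \subset B ->
  (Iu e tau Rq pv p (x |: B) u + Iu e tau Rq pv p A u <=
   Iu e tau Rq pv p (x |: A) u + Iu e tau Rq pv p B u)%N.
Proof.
move=> HAB; rewrite /Iu; apply: card_sub.
- by apply: setSD; apply: V_mono.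
- by apply: setSD; apply: V_mono; apply: subsetUr.
- rewrite -setDUl; apply: setSD; exact: V_union.
Qed.

Lemma Itot_mono (A B : {set 'I_n}) : A \subset B -> (Itot e tau Rq pv p A <= Itot e tau Rq pv p B)%N.
Proof. by move=> HAB; apply: leq_sum => u _; apply: Iu_mono. Qed.

Lemma Itot_sub (A B : {set 'I_n}) x : A \subset B ->
  (Itot e tau Rq pv p (x |: B) + Itot e tau Rq pv p A <=
   Itot e tau Rq pv p (x |: A) + Itot e tau Rq pv p B)%N.
Proof.
move=> HAB; rewrite /Itot -!big_split /=; apply: leq_sum => u _; exact: Iu_sub.
Qed.

Lemma Itot0 : Itot e tau Rq pv p set0 = 0%N.
Proof.
apply: big1 => u _; rewrite /Iu.
suff -> : visible (Gtil e Rq pv p set0) u tau = visible e u tau by rewrite setDv cards0.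
apply/setP => v; rewrite !inE; apply/idP/idP; apply: within_rel => x y //.
  by rewrite /Gtil inE andFb orbF.
by rewrite /Gtil => ->.
Qed.

End I.

Section Greedy.
Variables (R : realType) (T : finType) (f : {set T} -> R).
Hypothesis f0 : f set0 = 0.
Hypothesis fmono : forall A B : {set T}, A \subset B -> f A <= f B.
Hypothesis fsub : forall (A B : {set T}) x, A \subset B -> f (x |: B) - f B <= f (x |: A) - f A.

Lemma f_ge0 A : 0 <= f A.
Proof. by rewrite -f0; apply: fmono; apply: sub0set. Qed.

Lemma union_bound (M : {set T}) (s : seq T) :
  f ([set x in s] :|: M) <= f M + \sum_(x <- s) (f (x |: M) - f M).
Proof.
elim: s => [|a s IH].
  by rewrite big_nil addr0; apply: fmono; apply/subsetP => x; rewrite !inE.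
rewrite big_cons.
have -> : [set x in a :: s] :|: M = a |: ([set x in s] :|: M).
  by apply/setP => x; rewrite !inE orbA.
have := fsub a (subsetUr [set x in s] M); lra.
Qed.

Lemma greedy_bound (S : {set T}) (b : nat) (Ms : nat -> {set T}) (Mstar : {set T}) :
  (0 < b)%N -> Ms 0%N = set0 ->
  (forall t, (t < b)%N -> (S = set0 /\ Ms t.+1 = Ms t) \/
     exists2 us, us \in S & (Ms t.+1 = us |: Ms t /\
       forall u, u \in S -> f (u |: Ms t) - f (Ms t) <= f (us |: Ms t) - f (Ms t))) ->
  Mstar \subset S -> (#|Mstar| <= b)%N ->
  forall t, (t <= b)%N -> f Mstar - f (Ms t) <= (1 - (b%:R)^-1) ^+ t * f Mstar.
Proof.
move=> b0 H0 Hstep HS Hcard; elim => [|t IH] Ht.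
  by rewrite H0 f0 expr0 mul1r subr0.
have Htb : (t < b)%N by [].
have IH' := IH (ltnW Htb).
have bpos : 0 < (b%:R : R) by rewrite ltr0n.
have c0 : 0 <= 1 - (b%:R : R)^-1.
  rewrite subr_ge0 invf_le1 // ler1n //.
have fs0 := f_ge0 Mstar.
case: (Hstep t Htb) => [[HS0 ->]|[us Hus [-> Hmax]]].
  have -> : Mstar = set0 by apply/eqP; rewrite -subset0 -HS0.
  rewrite f0 mulr0 sub0r oppr_le0; exact: f_ge0.
set M := Ms t in IH' Hmax *.
set g := f (us |: M) - f M.
have g0 : 0 <= g by rewrite subr_ge0; apply: fmono; apply: subsetUr.
have key : f Mstar - f M <= b%:R * g.
  have h1 : f Mstar <= f ([set x in enum Mstar] :|: M).
    by apply: fmono; apply/subsetP => x Hx; rewrite !inE mem_enum Hx.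
  have h2 := union_bound M (enum Mstar).
  have h3 : \sum_(x <- enum Mstar) (f (x |: M) - f M) <= #|Mstar|%:R * g.
    rewrite big_enum /=.
    have -> : #|Mstar|%:R * g = \sum_(x in Mstar) g by rewrite sumr_const mulr_natl.
    apply: ler_sum => x Hx; apply: Hmax; exact: (subsetP HS).
  have h4 : #|Mstar|%:R * g <= b%:R * g by apply: ler_wpM2r => //; rewrite ler_nat.
  lra.
have key' : (f Mstar - f M) / b%:R <= g.
  by rewrite ler_pdivrMr // mulrC.
rewrite exprS -mulrA.
apply: le_trans (ler_wpM2l c0 IH').
have -> : f Mstar - f (us |: M) = (f Mstar - f M) - g by rewrite /g; ring.
rewrite mulrBl mul1r; lra.
Qed.

End Greedy.

Lemma pow_le_expR (R : realType) (b : nat) : (0 < b)%N ->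
  (1 - (b%:R : R)^-1) ^+ b <= (expR (1 : R))^-1.
Proof.
move=> b0.
have bpos : 0 < (b%:R : R) by rewrite ltr0n.
have c0 : 0 <= 1 - (b%:R : R)^-1 by rewrite subr_ge0 invf_le1 // ler1n.
have h : 1 - (b%:R : R)^-1 <= expR (- (b%:R)^-1) by have := expR_ge1Dx (- (b%:R : R)^-1).
apply: le_trans (lerXn2r _ _ _ h) _; rewrite ?nnegrE //; first exact: expR_ge0.
rewrite -expRM_natr mulNr mulVf ?gt_eqF // expRN //.
Qed.

Theorem theorem3 (R : realType) (n : nat) (e : rel 'I_n)
  (e_irr : forall x, ~~ e x x)
  (tau : nat) (tau_ge1 : (1 <= tau)%N)
  (Rq Sp : {set 'I_n}) (hdisj : [disjoint Rq & Sp])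
  (pv qv : 'I_n -> R)
  (hpv : forall u, u \in Rq -> 0 <= pv u <= 1)
  (hqv : forall u, u \in Sp -> 0 <= qv u <= 1)
  (b : nat) (b_pos : (0 < b)%N)
  (alpha p q : R) (halpha : 0 < alpha < 1)
  (hp : 0 <= p <= 1) (hq : 0 <= q <= 1) (hqp : q = alpha * p)
  (Ms : nat -> {set 'I_n}) (Mstar : {set 'I_n}) :
  greedy_run e tau Rq Sp pv qv p q b Ms ->
  optimal_set e tau Rq Sp pv qv p q b Mstar ->
  revenue e tau Rq pv p q (Ms b) >=
    (1 - (expR 1)^-1) * revenue e tau Rq pv p q Mstar.
Proof.
move=> [H0 Hstep] [HS [Hcard _]].
set f := revenue e tau Rq pv p q.
have pq0 : 0 <= p - q.
  rewrite hqp; case/andP: halpha => ? ?; case/andP: hp => ? ?; nra.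
have fE : forall M, f M = (p - q) * (Itot e tau Rq pv p M)%:R.
  by move=> M; rewrite /f /revenue mulrBl.
have f0 : f set0 = 0 by rewrite fE Itot0 mulr0.
have fmono : forall A B : {set 'I_n}, A \subset B -> f A <= f B.
  by move=> A B HAB; rewrite !fE; apply: ler_wpM2l => //; rewrite ler_nat; apply: Itot_mono.
have fsub : forall (A B : {set 'I_n}) x, A \subset B -> f (x |: B) - f B <= f (x |: A) - f A.
  move=> A B x HAB; rewrite !fE -!mulrBr; apply: ler_wpM2l => //.
  have := Itot_sub e tau Rq pv p x HAB; rewrite -(ler_nat R) !natrD; lra.
have := greedy_bound f0 fmono fsub b_pos H0 Hstep HS Hcard (leqnn b).
have := pow_le_expR R b_pos.
have := f_ge0 f0 fmono Mstar.
rewrite -/f; set c := (1 - _) ^+ b; set E := (expR 1)^-1 => h1 h2 h3.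
have : c * f Mstar <= E * f Mstar by apply: ler_wpM2r.
lra.
Qed.
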